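(* Let $s$ be an indeterminate; for an integer $k\ge 0$ put $\{k\}_s=s^k-s^{-k}$ and $\{k\}_s!=\{1\}_s\{2\}_s\cdots\{k\}_s$ (with $\{0\}_s!=1$). For positive integers $m,n$ let \[V_W(m,n)=\sum_{i=0}^{\min(m,n)-1}(-1)^{m+n}s^{-\frac{i^2+3i}{2}}\frac{\{m+i\}_s!\,\{n+i\}_s!\,\{i\}_s!}{\{1\}_s\,\{m-i-1\}_s!\,\{n-i-1\}_s!\,\{2i+1\}_s!}\] (the colored Jones polynomial of the Whitehead link). Let $E_m,E_n,Q_m,Q_n$ act on functions $f(m,n)$ by $(E_mf)(m,n)=f(m+1,n)$, $(E_nf)(m,n)=f(m,n+1)$, $(Q_mf)(m,n)=s^mf(m,n)$, $(Q_nf)(m,n)=s^nf(m,n)$. Then \[A^{\mathrm{bi}}_{s;mn}(W)=(E_n-sQ_n^2)(sQ_m^2E_m-1)-(E_m-sQ_m^2)(sQ_n^2E_n-1)\] satisfies $A^{\mathrm{bi}}_{s;mn}(W)\,V_W=0$.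
   Context: Products of operators are compositions; in particular $E_mQ_m=sQ_mE_m$, $E_nQ_n=sQ_nE_n$, and $E_m$ commutes with $Q_n$ and $E_n$, $E_n$ commutes with $Q_m$. *)

(* Defs.v *)
From HB Require Import structures.
From mathcomp Require Import all_boot all_order all_algebra.
Set Implicit Arguments. Unset Strict Implicit. Unset Printing Implicit Defensive.
Import Order.TTheory GRing.Theory Num.Theory.
Local Open Scope ring_scope.

Section Defs.
Variable F : fieldType.
Variable s : F.

Definition qint (k : nat) : F := s ^+ k - s ^- k.
Definition qfact (k : nat) : F := \prod_(1 <= j < k.+1) qint j.

(* colored Jones polynomial of the Whitehead link; (i^2+3i)/2 is an integer *)
Definition VW (m n : nat) : F :=
  \sum_(i < minn m n)
    (-1) ^+ (m + n) * s ^- ((i * i + 3 * i) %/ 2)%N *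
    (qfact (m + i) * qfact (n + i) * qfact i) /
    (qint 1 * qfact (m - i - 1) * qfact (n - i - 1) * qfact (2 * i + 1)).

Definition Em (f : nat -> nat -> F) : nat -> nat -> F := fun m n => f m.+1 n.
Definition En (f : nat -> nat -> F) : nat -> nat -> F := fun m n => f m n.+1.
Definition Qm (f : nat -> nat -> F) : nat -> nat -> F := fun m n => s ^+ m * f m n.
Definition Qn (f : nat -> nat -> F) : nat -> nat -> F := fun m n => s ^+ n * f m n.
Definition fsub (f g : nat -> nat -> F) : nat -> nat -> F := fun m n => f m n - g m n.
Definition fscale (c : F) (f : nat -> nat -> F) : nat -> nat -> F :=
  fun m n => c * f m n.

Definition Abi (f : nat -> nat -> F) : nat -> nat -> F :=
  let g1 := fsub (fscale s (Qm (Qm (Em f)))) f in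
  let g2 := fsub (fscale s (Qn (Qn (En f)))) f in
  fsub (fsub (En g1) (fscale s (Qn (Qn g1))))
       (fsub (Em g2) (fscale s (Qm (Qm g2)))).
End Defs.

(* Main.v *)
Require Import Defs.
From mathcomp Require Import all_boot all_order all_algebra.
From mathcomp Require Import ring zify.
Import GRing.Theory.
Local Open Scope ring_scope.

Section Proof.
Variable F : fieldType.
Variable s : F.
Hypothesis hs0 : s != 0.
Hypothesis hs : forall k : nat, (0 < k)%N -> qint s k != 0.

Definition g (a b : nat) : F := s ^+ a * s ^- b - s ^+ b * s ^- a.
Definition P (m i : nat) : F := \prod_(j < (2 * i).+1) g (m + j) i.
Definition Q (m i : nat) : F := \prod_(j < 2 * i) g (m + j.+1) i.
Definition Dd (i : nat) : F :=
  s ^- ((i * i + 3 * i) %/ 2)%N * qfact s i / (qint s 1 * qfact s (2 * i + 1)).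
Definition U (m n i : nat) : F := (-1) ^+ (m + n) * Dd i * (P m i * P n i).

Lemma sX_neq0 k : s ^+ k != 0.
Proof. exact: expf_neq0. Qed.

Lemma PQ1 m i : P m i = g m i * Q m i.
Proof. by rewrite /P big_ord_recl /= addn0. Qed.

Lemma PQ2 m i : P m.+1 i = Q m i * g (m + (2 * i).+1) i.
Proof.
rewrite /P big_ord_recr /=; congr (_ * _); last by rewrite addSnnS.
by apply: eq_bigr => j _; rewrite addSnnS.
Qed.

Lemma P0 m i : (m <= i)%N -> P m i = 0.
Proof.
move=> H; have Hj : (i - m < (2 * i).+1)%N by lia.
rewrite /P (bigD1 (Ordinal Hj)) //= subnKC // /g subrr mul0r //.
Qed.

Lemma qfact_neq0 k : qfact s k != 0.
Proof.
rewrite /qfact prodf_seq_neq0; apply/allP => j; rewrite mem_index_iota => /andP[H _].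
by apply: hs.
Qed.

Lemma qfact_split m i : (i < m)%N -> qfact s (m + i) = qfact s (m - i - 1) * P m i.
Proof.
move=> H; rewrite /qfact (@big_cat_nat _ _ _ (m - i - 1).+1) /=; last 2 first.
- by [].
- lia.
congr (_ * _); rewrite -{1}[(m - i - 1).+1]add0n big_addn big_mkord.
have -> : ((m + i).+1 - (m - i - 1).+1 = (2 * i).+1)%N by lia.
apply: eq_bigr => j _; rewrite /qint /g.
have -> : (m + j = (j + (m - i - 1).+1) + i)%N by lia.
set k := (j + (m - i - 1).+1)%N.
rewrite exprD; have := sX_neq0 k; have := sX_neq0 i => h1 h2; field.
by rewrite h1 h2.
Qed.

Lemma termE m n (i : nat) : (i < minn m n)%N ->
    (-1) ^+ (m + n) * s ^- ((i * i + 3 * i) %/ 2)%N *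
    (qfact s (m + i) * qfact s (n + i) * qfact s i) /
    (qint s 1 * qfact s (m - i - 1) * qfact s (n - i - 1) * qfact s (2 * i + 1))
  = U m n i.
Proof.
rewrite leq_min => /andP[Hm Hn].
rewrite (qfact_split _ _ Hm) (qfact_split _ _ Hn) /U /Dd.
have := qfact_neq0 (m - i - 1); have := qfact_neq0 (n - i - 1).
have := qfact_neq0 (2 * i + 1); have := hs 1 (ltn0Sn 0).
move=> h1 h2 h3 h4; field.
by rewrite h1 h2 h3 h4 sX_neq0.
Qed.

Lemma VWE m n N : (minn m n <= N)%N -> VW s m n = \sum_(0 <= i < N) U m n i.
Proof.
move=> H; rewrite (@big_cat_nat _ _ _ (minn m n) 0 N) //=.
have -> : \sum_(minn m n <= i < N) U m n i = 0.
  rewrite big_nat_cond; apply: big1 => i /andP[/andP[Hi _] _].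
  move: Hi; rewrite geq_min => /orP[Hi|Hi];
  by rewrite /U (P0 _ _ Hi) ?mul0r ?mulr0.
rewrite addr0.
rewrite big_mkord; apply: eq_bigr => i _; exact: termE.
Qed.

Lemma key m n i :
  let a := s * (s ^+ m * s ^+ m) - s * (s ^+ n * s ^+ n) in
  let b := s * (s ^+ m * s ^+ m) * (s * (s ^+ n * s ^+ n)) - 1 in
  a * (g (m + (2 * i).+1) i * g (n + (2 * i).+1) i - g m i * g n i)
  - b * (g m i * g (n + (2 * i).+1) i - g (m + (2 * i).+1) i * g n i) = 0.
Proof.
rewrite /g /= !exprD !exprS mul2n -addnn !exprD.
have := sX_neq0 m; have := sX_neq0 n; have := sX_neq0 i => h1 h2 h3.
field. by rewrite h1 h2 h3 hs0.
Qed.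

Lemma AbiE (f : nat -> nat -> F) m n :
  Abi s f m n =
  (s * (s ^+ m * s ^+ m) - s * (s ^+ n * s ^+ n)) * (f m.+1 n.+1 - f m n)
  + (s * (s ^+ m * s ^+ m) * (s * (s ^+ n * s ^+ n)) - 1) * (f m n.+1 - f m.+1 n).
Proof. rewrite /Abi /fsub /fscale /Qm /Qn /Em /En /=; ring. Qed.

End Proof.

Theorem mainTheorem2 (F : fieldType) (s : F)
    (hs0 : s != 0) (hs : forall k : nat, (0 < k)%N -> qint s k != 0)
    (m n : nat) (hm : (0 < m)%N) (hn : (0 < n)%N) :
  Abi s (VW s) m n = 0.
Proof.
rewrite AbiE.
have HN : forall a b, (a <= m.+1)%N -> (b <= n.+1)%N -> (minn a b <= m.+1)%N.
  move=> a b Ha Hb; rewrite geq_min Ha //.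
rewrite !(@VWE F s hs0 hs _ _ m.+1) //; try by rewrite geq_min ?leqnSn ?leqnn.
rewrite -!sumrB !mulr_sumr -big_split /=; apply: big1 => i _.
rewrite /U !PQ2 !PQ1.
have := @key F s hs0 m n i; rewrite /=.
set a := (s * _ - _); set b := (_ - 1).
set g1 := @g F s (m + _) i; set g2 := @g F s (n + _) i; set g3 := @g F s m i; set g4 := @g F s n i.
move=> K.
rewrite !addSn !addnS !exprS.
transitivity ((-1) ^+ (m + n) * @Dd F s i * @Q F s m i * @Q F s n i *
  (a * (g1 * g2 - g3 * g4) - b * (g3 * g2 - g1 * g4))); first by ring.
by rewrite K mulr0.
Qed.
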